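(* Consider the generalized linear model described in the context with $m=p\geq 2$ distinct design points $\mathbf{x}_1,\ldots,\mathbf{x}_m$, model matrix $\mathbf{X}\in\mathbb{R}^{m\times p}$ with $\mathrm{rank}(\mathbf{X})=p$, and $\nu_i>0$ for each $i=1,\ldots,m$. Then an allocation $\mathbf{w}_*=(w_1^*,\ldots,w_m^* )^T\in S_m$ is A-optimal if and only if \[ w_i^*=\frac{\sqrt{c_i/\nu_i}}{\sum_{j=1}^m\sqrt{c_j/\nu_j}},\qquad i=1,\ldots,m, \] where $c_i>0$ is the $i$th diagonal element of $(\mathbf{X}\mathbf{X}^T)^{-1}$.
   Context: Generalized linear model (GLM): independent responses $Y_i$ from a one-parameter exponential family with $E(Y_i)=\mu_i$ and $\eta_i=g(\mu_i)=\mathbf{X}_i^T\boldsymbol\beta$, where $g$ is the link function, $\mathbf{X}_i=\mathbf{q}(\mathbf{x}_i)=(q_1(\mathbf{x}_i),\ldots,q_p(\mathbf{x}_i))^T$ for given predictor functions $q_1,\ldots,q_p$ and covariate vectors $\mathbf{x}_i\in\mathbb{R}^d$, and $\boldsymbol\beta\in\mathbb{R}^p$ is a fixed (assumed) parameter vector. Let $\nu_i=(\partial\mu_i/\partial\eta_i)^2/\mathrm{Var}(Y_i)\ge 0$. Given distinct design points $\mathbf{x}_1,\ldots,\mathbf{x}_m$, the model matrix is $\mathbf{X}=(\mathbf{q}(\mathbf{x}_1),\ldots,\mathbf{q}(\mathbf{x}_m))^T\in\mathbb{R}^{m\times p}$. Let $S_m=\{\mathbf{w}=(w_1,\ldots,w_m)^T\in\mathbb{R}^m: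 w_i\ge 0,\ \sum_i w_i=1\}$, $\mathbf{W}=\mathrm{diag}\{w_1\nu_1,\ldots,w_m\nu_m\}$, $f(\mathbf{w})=|\mathbf{X}^T\mathbf{W}\mathbf{X}|$, and $h(\mathbf{w})=[\mathrm{tr}((\mathbf{X}^T\mathbf{W}\mathbf{X})^{-1})]^{-1}$ if $f(\mathbf{w})>0$, $h(\mathbf{w})=0$ if $f(\mathbf{w})=0$. An allocation $\mathbf{w}\in S_m$ is A-optimal if it maximizes $h$ over $S_m$. *)

(* Defs.v *)
From HB Require Import structures.
From mathcomp Require Import all_boot all_order all_algebra.
From mathcomp Require Import reals.
Set Implicit Arguments. Unset Strict Implicit. Unset Printing Implicit Defensive.
Import Order.TTheory GRing.Theory Num.Theory.
Local Open Scope ring_scope.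

Section GLM.
Variable R : realType.

Definition model_matrix (m p d : nat) (q : 'rV[R]_d -> 'rV[R]_p)
  (x : 'I_m -> 'rV[R]_d) : 'M[R]_(m, p) :=
  \matrix_(i < m, j < p) q (x i) 0 j.

Definition in_simplex (m : nat) (w : 'I_m -> R) : Prop :=
  (forall i, 0 <= w i) /\ \sum_(i < m) w i = 1.

Definition info_mx (m p : nat) (X : 'M[R]_(m, p)) (nu w : 'I_m -> R)
  : 'M[R]_p :=
  X^T *m diag_mx (\row_i (w i * nu i)) *m X.

Definition f_det (m p : nat) (X : 'M[R]_(m, p)) (nu w : 'I_m -> R) : R :=
  \det (info_mx X nu w).

Definition h_A (m p : nat) (X : 'M[R]_(m, p)) (nu w : 'I_m -> R) : R :=
  if 0 < f_det X nu w then (\tr (invmx (info_mx X nu w)))^-1 else 0.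

Definition A_optimal (m p : nat) (X : 'M[R]_(m, p)) (nu w : 'I_m -> R)
  : Prop :=
  in_simplex w /\
  forall w' : 'I_m -> R, in_simplex w' -> h_A X nu w' <= h_A X nu w.

End GLM.

(* Main.v *)
Require Import Defs.
From HB Require Import structures.
From mathcomp Require Import all_boot all_order all_algebra.
From mathcomp Require Import reals.
From mathcomp Require Import ring lra.
Import Order.TTheory GRing.Theory Num.Theory.
Local Open Scope ring_scope.
Section Mat.
Variable R : realType.
Variable n : nat.
Variable X : 'M[R]_n.
Hypothesis Xu : X \in unitmx.
Variable nu : 'I_n -> R.
Hypothesis nupos : forall i, 0 < nu i.

Let Y := invmx X.

Lemma inv_uniq (M B : 'M[R]_n) : M \in unitmx -> M *m B = 1%:M -> invmx M = B.
Proof. move=> Mu MB. by rewrite -[RHS](mulKmx Mu) MB mulmx1. Qed.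

Lemma cXX : invmx (X *m X^T) = Y^T *m Y.
Proof.
apply: inv_uniq; first by rewrite unitmx_mul unitmx_tr Xu.
by rewrite mulmxA -(mulmxA X) -trmx_mul /Y (mulVmx Xu) trmx1 mulmx1 (mulmxV Xu).
Qed.

Lemma fdet_eq (w : 'I_n -> R) :
  f_det X nu w = \det X ^+ 2 * \prod_i (w i * nu i).
Proof.
rewrite /f_det /info_mx !det_mulmx det_tr det_diag.
under eq_bigr do rewrite mxE.
by rewrite expr2; ring.
Qed.

Lemma h_pos (w : 'I_n -> R) : (forall i, 0 < w i) ->
  h_A X nu w = (\sum_i ((Y^T *m Y) i i / nu i) / w i)^-1.
Proof.
move=> wp.
have dX : 0 < \det X ^+ 2.
  rewrite exprn_even_gt0 //. by rewrite -unitfE -unitmxE.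
rewrite /h_A.
have -> : 0 < f_det X nu w.
  rewrite fdet_eq mulr_gt0 //; apply: prodr_gt0 => i _; exact: mulr_gt0.
congr (_^-1).
set D' := diag_mx (\row_i (w i * nu i)^-1).
have DD' : diag_mx (\row_i (w i * nu i)) *m D' = 1%:M.
  rewrite mulmx_diag -diag_const_mx; congr diag_mx; apply/rowP => j.
  rewrite !mxE mulfV //. by apply/lt0r_neq0/mulr_gt0.
have -> : invmx (info_mx X nu w) = Y *m D' *m Y^T.
  apply: inv_uniq.
    rewrite /info_mx !unitmx_mul unitmx_tr Xu andbT /= unitmxE det_diag unitfE.
    apply/lt0r_neq0/prodr_gt0 => i _; rewrite mxE; exact: mulr_gt0.
  rewrite /info_mx !mulmxA /Y (mulmxK Xu) -!mulmxA (mulmxA (diag_mx _) D') DD' mul1mx -trmx_mul (mulVmx Xu) trmx1 //.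
rewrite mxtrace_mulC mulmxA mxtrace_mulC /mxtrace.
apply: eq_bigr => i _.
rewrite mul_diag_mx !mxE invfM mulrC. field.
by apply/andP; split; apply/lt0r_neq0.
Qed.

Lemma h_zero (w : 'I_n -> R) i : (forall i, 0 <= w i) -> ~~ (0 < w i) ->
  h_A X nu w = 0.
Proof.
move=> w0 nw.
have wi0 : w i = 0.
  by apply/eqP; move: nw; rewrite lt_neqAle w0 andbT eq_sym negbK.
rewrite /h_A fdet_eq (bigD1 i) //= wi0 !(mul0r, mulr0) ltxx //.
Qed.

Lemma cpos i : 0 < (Y^T *m Y) i i.
Proof.
rewrite mxE.
have H : forall k, 0 <= Y^T i k * Y k i by move=> k; rewrite mxE -expr2 sqr_ge0.
rewrite lt_neqAle sumr_ge0 // andbT eq_sym; apply/eqP => /psumr_eq0P H0.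
have : (X *m Y) i i = 1 by rewrite /Y (mulmxV Xu) mxE eqxx.
rewrite mxE big1 => [|k _].
  by move/eqP; rewrite eq_sym oner_eq0.
have := H0 (fun k _ => H k) k isT; rewrite mxE -expr2 => /eqP.
by rewrite sqrf_eq0 => /eqP ->; rewrite mulr0.
Qed.

End Mat.
Section Opt.
Variable R : realType.
Variable n : nat.
Variable a : 'I_n -> R.
Hypothesis apos : forall i, 0 < a i.

Lemma T_eq (w : 'I_n -> R) : (forall i, 0 < w i) -> \sum_i w i = 1 ->
  let S := \sum_i Num.sqrt (a i) in
  \sum_i a i / w i = S ^+ 2 + \sum_i (Num.sqrt (a i) - S * w i) ^+ 2 / w i.
Proof.
move=> wp sw S.
have E i : a i / w i = (Num.sqrt (a i) - S * w i) ^+ 2 / w i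
          + (2 * S * Num.sqrt (a i) - S ^+ 2 * w i).
  rewrite -{1}[a i](sqr_sqrtr (ltW (apos i))); field; exact: lt0r_neq0.
rewrite (eq_bigr _ (fun i _ => E i)) big_split /= sumrB -!mulr_sumr sw -/S.
ring.
Qed.

Lemma T_ge (w : 'I_n -> R) : (forall i, 0 < w i) -> \sum_i w i = 1 ->
  (\sum_i Num.sqrt (a i)) ^+ 2 <= \sum_i a i / w i.
Proof.
move=> wp sw; rewrite T_eq // lerDl; apply: sumr_ge0 => i _.
apply: divr_ge0; [exact: sqr_ge0 | exact: ltW].
Qed.

Lemma T_eqS (w : 'I_n -> R) : (forall i, 0 < w i) -> \sum_i w i = 1 ->
  \sum_i a i / w i = (\sum_i Num.sqrt (a i)) ^+ 2 ->
  forall i, w i = Num.sqrt (a i) / \sum_j Num.sqrt (a j).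
Proof.
move=> wp sw; rewrite T_eq //; set S := \sum_i _; rewrite -{2}[S ^+ 2]addr0 => /addrI.
move/psumr_eq0P => H i.
have Spos : 0 < S.
  rewrite /S (bigD1 i) //= ltr_pwDl ?sqrtr_gt0 //; apply: sumr_ge0 => *; exact: sqrtr_ge0.
move: (H (fun j _ => divr_ge0 (sqr_ge0 _) (ltW (wp j))) i isT) => /eqP.
rewrite mulf_eq0 invr_eq0 (negbTE (lt0r_neq0 (wp i))) orbF sqrf_eq0 subr_eq0 => /eqP ->.
field; exact: lt0r_neq0.
Qed.

Lemma T_star : let S := \sum_i Num.sqrt (a i) in 0 < S ->
  \sum_i a i / (Num.sqrt (a i) / S) = S ^+ 2.
Proof.
move=> S Sp.
have E i : a i / (Num.sqrt (a i) / S) = S * Num.sqrt (a i).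
  rewrite -{1}[a i](sqr_sqrtr (ltW (apos i))); field.
  by apply/andP; split; apply: lt0r_neq0 => //; rewrite sqrtr_gt0.
by rewrite (eq_bigr _ (fun i _ => E i)) -mulr_sumr -/S expr2.
Qed.
End Opt.

Theorem theorem1 (R : realType) (p d : nat) (q : 'rV[R]_d -> 'rV[R]_p)
  (x : 'I_p -> 'rV[R]_d) (nu : 'I_p -> R) (w : 'I_p -> R) :
  (2 <= p)%N ->
  injective x ->
  \rank (model_matrix q x) = p ->
  (forall i, 0 < nu i) ->
  in_simplex w ->
  let X := model_matrix q x in
  let c := fun i : 'I_p => (invmx (X *m X^T)) i i in
  A_optimal X nu w <->
  (forall i : 'I_p,
     w i = Num.sqrt (c i / nu i) / \sum_(j < p) Num.sqrt (c j / nu j)).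
Proof.
move=> p2 _ rk nup ws X c.
have Xu : X \in unitmx by rewrite -row_free_unit /row_free rk.
pose a := fun i => c i / nu i.
change (A_optimal X nu w <->
  (forall i : 'I_p, w i = Num.sqrt (a i) / \sum_(j < p) Num.sqrt (a j))).
have ca i : c i = ((invmx X)^T *m invmx X) i i by rewrite /c cXX.
have apos i : 0 < a i by rewrite /a ca divr_gt0 ?cpos.
have hp w' : (forall i, 0 < w' i) -> h_A X nu w' = (\sum_i a i / w' i)^-1.
  move=> w'p; rewrite h_pos //; congr (_^-1); apply: eq_bigr => i _.
  by rewrite /a ca.
set S := \sum_i Num.sqrt (a i).
have i0 : 'I_p := Ordinal (ltnW p2).
have Spos : 0 < S.
  rewrite /S (bigD1 i0) //= ltr_pwDl ?sqrtr_gt0 //; apply: sumr_ge0 => *; exact: sqrtr_ge0.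
have S2pos : 0 < S ^+ 2 by rewrite exprn_gt0.
pose ws' := fun i => Num.sqrt (a i) / S.
have ws'p i : 0 < ws' i by rewrite /ws' divr_gt0 ?sqrtr_gt0.
have ws's : in_simplex ws'.
  split; first by move=> i; exact: ltW.
  by rewrite /ws' -mulr_suml -/S mulfV // lt0r_neq0.
have hstar : h_A X nu ws' = (S ^+ 2)^-1 by rewrite hp // T_star.
split.
  case=> _ H.
  have Hs := H ws' ws's; rewrite hstar in Hs.
  have wp : forall i, 0 < w i.
    move=> i; apply/negPn/negP => ni.
    move: Hs; rewrite (@h_zero _ _ X nu _ _ ws.1 ni) leNgt invr_gt0 S2pos //.
  rewrite hp // lef_pV2 ?posrE // in Hs; last first.
    apply: lt_le_trans S2pos _; apply: T_ge => //; exact: ws.2.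
  apply: T_eqS => //; first exact: ws.2.
  apply/le_anti; rewrite Hs /=; apply: T_ge => //; exact: ws.2.
move=> E.
have wp i : 0 < w i by rewrite E divr_gt0 ?sqrtr_gt0.
split; first exact: ws.
move=> w' [w'0 w'1].
have -> : h_A X nu w = (S ^+ 2)^-1.
  rewrite hp //; congr (_^-1); rewrite -(@T_star _ _ _ apos Spos); apply: eq_bigr => i _.
  by rewrite E.
case: (boolP [forall i, 0 < w' i]) => [/forallP w'p | /forallPn [i ni]].
  have Tg := @T_ge _ _ _ apos w' w'p w'1.
  rewrite hp // lef_pV2 ?posrE //; exact: (lt_le_trans S2pos Tg).
by rewrite (@h_zero _ _ X nu _ _ w'0 ni) invr_ge0 ltW.
Qed.
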